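(* Let $V:\mathbb{R}^3\to\mathbb{R}$ satisfy \[ \int_{\mathbb{R}^3\times\mathbb{R}^3}\frac{|V(x)||V(y)|}{|x-y|^2}\,dx\,dy<(4\pi)^2,\qquad \|V\|_{\mathcal K}:=\sup_{x\in\mathbb{R}^3}\int_{\mathbb{R}^3}\frac{|V(y)|}{|x-y|}\,dy<4\pi . \] Then for every positive integer $k$, \[ \sup_{x_0,x_{k+1}\in\mathbb{R}^3}\int_{\mathbb{R}^{3k}}\frac{\prod_{j=1}^k|V(x_j)|}{\prod_{j=0}^k|x_j-x_{j+1}|}\sum_{\ell=0}^k|x_\ell-x_{\ell+1}|\,dx_1\cdots dx_k\le(k+1)\|V\|_{\mathcal K}^k . \] *)

(* Defs.v *)
From HB Require Import structures.
From mathcomp Require Import all_boot all_order all_algebra.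
From mathcomp Require Import all_classical all_reals all_analysis.
Set Implicit Arguments. Unset Strict Implicit. Unset Printing Implicit Defensive.
Import Order.TTheory GRing.Theory Num.Theory.
Import numFieldNormedType.Exports.
Local Open Scope classical_set_scope.
Local Open Scope ring_scope.

Definition R3 (R : realType) := ((R * R) * R)%type.

Definition leb3 (R : realType) :=
  ((@lebesgue_measure R \x @lebesgue_measure R) \x @lebesgue_measure R)%E.

Definition dist3 (R : realType) (x y : R3 R) : R :=
  Num.sqrt ((x.1.1 - y.1.1) ^+ 2 + (x.1.2 - y.1.2) ^+ 2 + (x.2 - y.2) ^+ 2).

Definition Knorm (R : realType) (V : R3 R -> R) : \bar R :=
  ereal_sup [set (\int[@leb3 R]_(y in setT) (`|V y| / dist3 x y)%:E)%E
            | x in [set: R3 R]].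

Fixpoint iter_int (R : realType) (n : nat) (f : seq (R3 R) -> \bar R) : \bar R :=
  match n with
  | 0 => f [::]
  | n'.+1 => (\int[@leb3 R]_(x in setT) iter_int n' (fun s => f (x :: s)))%E
  end.

Definition chain_integrand (R : realType) (V : R3 R -> R) (k : nat)
    (x0 : R3 R) (pts : seq (R3 R)) : R :=
  (\prod_(1 <= j < k.+1) `|V (nth x0 pts j)|)
  / (\prod_(0 <= j < k.+1) dist3 (nth x0 pts j) (nth x0 pts j.+1))
  * (\sum_(0 <= l < k.+1) dist3 (nth x0 pts l) (nth x0 pts l.+1)).

Definition chain_sup (R : realType) (V : R3 R -> R) (k : nat) : \bar R :=
  ereal_sup [set iter_int k
      (fun s => (chain_integrand V k x0 (x0 :: s ++ [:: xk1]))%:E)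
    | x0 in [set: R3 R] & xk1 in [set: R3 R]].

(* Main.v *)
Require Import Defs.
From HB Require Import structures.
From mathcomp Require Import all_boot all_order all_algebra.
From mathcomp Require Import all_classical all_reals all_analysis.
From mathcomp Require Import measurable_realfun.
From mathcomp Require Import ring.
Import Order.TTheory GRing.Theory Num.Theory.
Import numFieldNormedType.Exports.
Local Open Scope classical_set_scope.
Local Open Scope ring_scope.

Section SF.
Local Open Scope ereal_scope.
Context d1 d2 (T1 : measurableType d1) (T2 : measurableType d2) (R : realType).
Variable m1 : {sigma_finite_measure set T1 -> \bar R}.
Variable m2 : {sigma_finite_measure set T2 -> \bar R}.
Lemma prod_sigma_finite : sigma_finite setT (m1 \x m2).
Proof.
have /sigma_finiteP[F [TF ndF Foo]] := sigma_finiteT m1.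
have /sigma_finiteP[G [TG ndG Goo]] := sigma_finiteT m2.
exists (fun n => F n `*` G n).
 rewrite -setXTT TF TG predeqE => -[x y]; split.
    move=> [/= [n _ Fnx] [k _ Gky]]; exists (maxn n k) => //; split.
    - by move: x Fnx; exact/subsetPset/ndF/leq_maxl.
    - by move: y Gky; exact/subsetPset/ndG/leq_maxr.
  by move=> [n _ []/= ? ?]; split; exists n.
move=> k; have [? ?] := Foo k; have [? ?] := Goo k.
split; first exact: measurableX.
by rewrite product_measure1E// lte_mul_pinfty// ge0_fin_numE.
Qed.
End SF.

Definition leb2 (R : realType) := (@lebesgue_measure R \x @lebesgue_measure R)%E.
HB.instance Definition _ (R : realType) := Measure.on (@leb2 R).
HB.instance Definition _ (R : realType) := Measure_isSigmaFinite.Build _ _ _ (@leb2 R)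
  (@prod_sigma_finite _ _ _ _ R lebesgue_measure lebesgue_measure).
HB.instance Definition _ (R : realType) := Measure.on (@leb3 R).
HB.instance Definition _ (R : realType) := Measure_isSigmaFinite.Build _ _ _ (@leb3 R)
  (@prod_sigma_finite _ _ _ _ R (@leb2 R) lebesgue_measure).

Lemma int_le_nm d (T : measurableType d) (R : realType) (mu : {measure set T -> \bar R})
  (f g : T -> \bar R) : (forall x, 0 <= f x)%E -> (forall x, f x <= g x)%E ->
  (\int[mu]_x f x <= \int[mu]_x g x)%E.
Proof.
move=> f0 fg.
have g0 x : (0 <= g x)%E by apply: le_trans (f0 x) (fg x).
rewrite !ge0_integralTE//.
apply: le_ereal_sup => _ [h /= hf <-]; exists h => //= x.
exact: le_trans (hf x) (fg x).
Qed.

Lemma idm (R : realType) : measurable_fun (T := measurableTypeR R) (U := R) setT id.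
Proof. by move=> _ Y mY; rewrite setTI. Qed.

Section iter.
Variable R : realType.
Local Notation X := ((measurableTypeR R * measurableTypeR R) * measurableTypeR R)%type.
Local Notation mu := (@leb3 R).

Lemma iter_int_ge0 n (f : seq X -> \bar R) :
  (forall s, size s = n -> 0 <= f s)%E -> (0 <= iter_int n f)%E.
Proof.
elim: n f => [|n IH] f f0 /=; first exact: f0.
apply: integral_ge0 => x _; apply: IH => s hs; apply: f0 => /=; rewrite hs.
done.
Qed.

Lemma iter_int_le n (f g : seq X -> \bar R) :
  (forall s, size s = n -> 0 <= f s)%E ->
  (forall s, size s = n -> f s <= g s)%E -> (iter_int n f <= iter_int n g)%E.
Proof.
elim: n f g => [|n IH] f g f0 fg /=; first exact: fg.
apply: int_le_nm => x.
  by apply: iter_int_ge0 => s hs; apply: f0 => /=; rewrite hs.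
by apply: IH => s hs; [apply: f0|apply: fg]; rewrite /= hs.
Qed.


Lemma iter_int_meas n : forall d (T : measurableType d) (F : T -> seq X -> \bar R),
  (forall p s, 0 <= F p s)%E ->
  measurable_fun setT (fun pt : T * n.-tuple X => F pt.1 (tval pt.2)) ->
  measurable_fun setT (fun p => iter_int n (F p)).
Proof.
elim: n => [|n IH] d T F F0 mF /=.
  have -> : (fun p => F p [::]) =
     (fun pt : T * 0.-tuple X => F pt.1 (tval pt.2)) \o (fun p => (p, [tuple])).
    by [].
  apply: measurableT_comp => //; apply: measurable_fun_pair => //.
have H := IH _ (T * X)%type (fun px s => F px.1 (px.2 :: s)) (fun _ _ => F0 _ _).
have {}H := H _.
have mc : measurable_fun setT (fun pt : (T * X) * n.-tuple X =>
    (pt.1.1, [the n.+1.-tuple X of pt.1.2 :: pt.2])).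
  apply: measurable_fun_pair.
    exact: (measurableT_comp measurable_fst measurable_fst).
  apply: measurable_cons => //.
  exact: (measurableT_comp measurable_snd measurable_fst).
have := H (measurableT_comp mF mc).
move=> {}H.
have := (measurable_fun_fubini_tonelli_F (m2:=mu) _ H
  (fun px => @iter_int_ge0 n _ (fun s _ => F0 _ _))).
rewrite /fubini_F /=.
done.
Qed.


Definition JM n (f : seq X -> \bar R) :=
  measurable_fun setT (fun t : n.-tuple X => f (tval t)).

Lemma JM_sec n f : JM n.+1 f ->
  measurable_fun setT (fun pt : X * n.-tuple X => f (pt.1 :: tval pt.2)).
Proof.
move=> mf.
have mc : measurable_fun setT (fun pt : X * n.-tuple X =>
    [the n.+1.-tuple X of pt.1 :: pt.2]).
  by apply: measurable_cons.
exact: (measurableT_comp mf mc).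
Qed.

Lemma JM_cons n f x : JM n.+1 f -> JM n (fun s => f (x :: s)).
Proof.
move=> /JM_sec mf.
exact: (measurable_fun_pair2 (f := fun pt : X * n.-tuple X => f (pt.1 :: tval pt.2)) x mf).
Qed.

Lemma iter_intD n (f g : seq X -> \bar R) : (forall s, 0 <= f s)%E -> (forall s, 0 <= g s)%E ->
  JM n f -> JM n g ->
  iter_int n (fun s => f s + g s)%E = (iter_int n f + iter_int n g)%E.
Proof.
elim: n f g => [//|n IH] f g f0 g0 mf mg /=.
transitivity (\int[mu]_x (iter_int n (fun s => f (x::s)) + iter_int n (fun s => g (x::s))))%E.
  by apply: eq_integral => x _; rewrite IH//; exact: JM_cons.
apply: ge0_integralD => //.
- by move=> x _; apply: iter_int_ge0.
- by apply: (@iter_int_meas n _ X (fun x s => f (x :: s))) => //; apply: JM_sec.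
- by move=> x _; apply: iter_int_ge0.
- by apply: (@iter_int_meas n _ X (fun x s => g (x :: s))) => //; apply: JM_sec.
Qed.

Lemma iter_intZ n (f : seq X -> \bar R) (c : R) : 0 <= c -> (forall s, 0 <= f s)%E ->
  JM n f -> iter_int n (fun s => c%:E * f s)%E = (c%:E * iter_int n f)%E.
Proof.
elim: n f => [//|n IH] f c0 f0 mf /=.
transitivity (\int[mu]_x (c%:E * iter_int n (fun s => f (x::s))))%E.
  by apply: eq_integral => x _; rewrite IH//; exact: JM_cons.
apply: ge0_integralZl_EFin => //.
- by move=> x _; apply: iter_int_ge0.
- by apply: (@iter_int_meas n _ X (fun x s => f (x :: s))) => //; apply: JM_sec.
Qed.

End iter.
Arguments JM {R} n f.

Section chain.
Variable R : realType.
Local Notation X := ((measurableTypeR R * measurableTypeR R) * measurableTypeR R)%type.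
Local Notation mu := (@leb3 R).
Variable V : X -> R.
Hypothesis mV : measurable_fun setT V.

Lemma dist3C (x y : X) : dist3 x y = dist3 y x.
Proof.
by rewrite /dist3 -[x.1.1 - _]opprB -[x.1.2 - _]opprB -[x.2 - _]opprB !sqrrN.
Qed.

Lemma dist3_ge0 (x y : X) : 0 <= dist3 x y.
Proof. exact: sqrtr_ge0. Qed.

Lemma mdist {d} {T : measurableType d} {f g : T -> X} :
  measurable_fun setT f -> measurable_fun setT g ->
  measurable_fun setT (fun t => dist3 (f t) (g t)).
Proof.
move=> mf mg; rewrite /dist3.
apply: measurableT_comp; first exact: (continuous_measurable_fun (@sqrt_continuous R)).
have m11 h : measurable_fun setT h -> measurable_fun (U := R) setT (fun t : T => (h t : X).1.1).
  move=> mh; exact: (measurableT_comp (@idm R) (measurableT_comp measurable_fst (measurableT_comp measurable_fst mh))).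
have m12 h : measurable_fun setT h -> measurable_fun (U := R) setT (fun t : T => (h t : X).1.2).
  move=> mh; exact: (measurableT_comp (@idm R) (measurableT_comp measurable_snd (measurableT_comp measurable_fst mh))).
have m2 h : measurable_fun setT h -> measurable_fun (U := R) setT (fun t : T => (h t : X).2).
  move=> mh; exact: (measurableT_comp (@idm R) (measurableT_comp measurable_snd mh)).
apply: measurable_funD; [apply: measurable_funD|];
  apply: measurable_funX; apply: measurable_funB; auto.
Qed.

Definition kap (x y : X) : R := `|V y| / dist3 x y.

Lemma kap_ge0 x y : 0 <= kap x y.
Proof. by rewrite /kap divr_ge0 ?dist3_ge0. Qed.

Lemma mkap {d} {T : measurableType d} {f g : T -> X} :
  measurable_fun setT f -> measurable_fun setT g ->
  measurable_fun setT (fun t => kap (f t) (g t)).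
Proof.
move=> mf mg; rewrite /kap.
have -> : (fun t => `|V (g t)| / dist3 (f t) (g t)) =
    (fun t => `|V (g t)| * (dist3 (f t) (g t)) `^ (-1)).
  by apply/funext => t; rewrite powR_inv1 ?dist3_ge0.
have h1 : measurable_fun setT (fun t => `|V (g t)|).
  by apply: measurableT_comp; [exact: normr_measurable|exact: measurableT_comp].
have h2 : measurable_fun setT (fun t => (dist3 (f t) (g t)) `^ (-1)).
  exact: (measurableT_comp (measurable_powR (-1)) (mdist mf mg)).
exact: (measurable_funM h1 h2).
Qed.

Variable z : X.

Fixpoint Qf (s : seq X) : R :=
  if s is y :: s' then kap (head z s') y * Qf s' else 1.

Fixpoint Gf (x0 : X) (s : seq X) : R :=
  if s is y :: s' then Qf (y :: s') + kap x0 y * Gf y s' else 1.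

Lemma Qf_ge0 s : 0 <= Qf s.
Proof. by elim: s => [|y s IH] //=; rewrite mulr_ge0 ?kap_ge0. Qed.

Lemma Gf_ge0 x s : 0 <= Gf x s.
Proof.
elim: s x => [|y s IH] x; first by [].
by apply: addr_ge0; [exact: (Qf_ge0 (y::s))|apply: mulr_ge0; [exact: kap_ge0|exact: IH]].
Qed.

Lemma mhead n : measurable_fun setT (fun t : n.-tuple X => head z t).
Proof.
case: n => [|n].
  have -> : (fun t : 0.-tuple X => head z t) = cst z.
    by apply/funext => t; rewrite tuple0.
  exact: measurable_cst.
have -> : (fun t : n.+1.-tuple X => head z t) = (fun t => tnth t ord0).
  apply/funext => t; case: t => s hs; case: s hs => [|y s] hs //=.
exact: measurable_tnth.
Qed.

Lemma mthead n : measurable_fun setT (fun t : n.+1.-tuple X => thead t).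
Proof. exact: measurable_tnth. Qed.

Lemma mbehead n : measurable_fun setT (fun t : n.+1.-tuple X => [tuple of behead t]).
Proof. exact: measurable_behead. Qed.

Lemma mQf n : measurable_fun setT (fun t : n.-tuple X => Qf t).
Proof.
elim: n => [|n IH].
  have -> : (fun t : 0.-tuple X => Qf t) = cst 1.
    by apply/funext => t; rewrite tuple0.
  exact: measurable_cst.
have -> : (fun t : n.+1.-tuple X => Qf t) =
  (fun t => kap (head z [tuple of behead t]) (thead t) * Qf [tuple of behead t]).
  apply/funext => t; case: t => s hs; case: s hs => [|y s] hs //=.
apply: measurable_funM.
  apply: mkap; last exact: mthead.
  exact: (measurableT_comp (mhead n) (mbehead n)).
exact: (measurableT_comp IH (mbehead n)).
Qed.

Lemma mGf n : measurable_fun setT (fun pt : X * n.-tuple X => Gf pt.1 pt.2).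
Proof.
elim: n => [|n IH].
  have -> : (fun pt : X * 0.-tuple X => Gf pt.1 pt.2) = cst 1.
    by apply/funext => -[x t]; rewrite tuple0.
  exact: measurable_cst.
have -> : (fun pt : X * n.+1.-tuple X => Gf pt.1 pt.2) =
  (fun pt => Qf pt.2 + kap pt.1 (thead pt.2) *
     Gf (thead pt.2) [tuple of behead pt.2]).
  apply/funext => -[x t]; case: t => s hs; case: s hs => [|y s] hs //=.
apply: measurable_funD.
  exact: (measurableT_comp (mQf n.+1) measurable_snd).
apply: measurable_funM.
  apply: mkap => //.
  exact: (measurableT_comp (mthead n) measurable_snd).
have h1 := measurableT_comp (mthead n) (@measurable_snd _ _ X (n.+1.-tuple X)).
have h2 := measurableT_comp (mbehead n) (@measurable_snd _ _ X (n.+1.-tuple X)).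
exact: (measurableT_comp IH (measurable_fun_pair h1 h2)).
Qed.

Local Open Scope ereal_scope.

Lemma JMQ n : JM n (fun s => (Qf s)%:E).
Proof. by apply/measurable_EFinP; exact: mQf. Qed.

Definition An n (x : X) := iter_int n (fun s => (Qf (x :: s))%:E).

Lemma An_ge0 n x : 0 <= An n x.
Proof. by apply: iter_int_ge0 => s _; rewrite lee_fin Qf_ge0. Qed.

Lemma mAn n : measurable_fun setT (An n).
Proof.
apply: (@iter_int_meas R n _ X (fun x s => (Qf (x :: s))%:E)).
  by move=> p s; rewrite lee_fin Qf_ge0.
exact: (@JM_sec R n _ (JMQ n.+1)).
Qed.

Lemma An_S n x : An n.+1 x = \int[mu]_y ((kap y x)%:E * An n y).
Proof.
rewrite /An /=; apply: eq_integral => y _.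
have := @iter_intZ R n (fun s => (Qf (y :: s))%:E) (kap y x) (kap_ge0 _ _)
  (fun s => Qf_ge0 (y :: s)) (@JM_cons R n _ y (JMQ n.+1)).
move=> <-; congr iter_int; apply/funext => s.
Qed.

Variable K : R.
Hypothesis K0 : (0 <= K)%R.
Hypothesis hK : forall x, \int[mu]_y (kap x y)%:E <= K%:E.

Lemma intA n : \int[mu]_x An n x <= (K ^+ n.+1)%:E.
Proof.
elim: n => [|n IH].
  rewrite /An /= expr1.
  under eq_integral do rewrite mulr1.
  exact: hK.
under eq_integral do rewrite An_S.
have mf : measurable_fun setT (fun p : X * X => (kap p.2 p.1)%:E * An n p.2).
  apply: emeasurable_funM.
    by apply/measurable_EFinP; apply: mkap.
  exact: (measurableT_comp (mAn n) measurable_snd).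
have f0 : forall p : X * X, 0 <= (kap p.2 p.1)%:E * An n p.2.
  by move=> p; rewrite mule_ge0 ?lee_fin ?kap_ge0 ?An_ge0.
rewrite (fubini_tonelli (m1:=mu) (m2:=mu) _ mf f0) /=.
apply: le_trans (_ : \int[mu]_y (K%:E * An n y) <= _).
  apply: int_le_nm => y.
    by apply: integral_ge0 => x _; rewrite mule_ge0 ?lee_fin ?kap_ge0 ?An_ge0.
  have mk : measurable_fun setT (fun x => (kap y x)%:E).
    by apply/measurable_EFinP; apply: mkap.
  rewrite (ge0_integralZr mu measurableT mk) //.
  - by apply: lee_wpmul2r; [exact: An_ge0|exact: hK].
  - by move=> x _; rewrite lee_fin kap_ge0.
  - exact: An_ge0.
rewrite ge0_integralZl_EFin//; last exact: mAn.
  by rewrite exprS EFinM lee_wpmul2l// lee_fin.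
by move=> y _; exact: An_ge0.
Qed.


Lemma intQ n : iter_int n (fun s => (Qf s)%:E) <= (K ^+ n)%:E.
Proof.
case: n => [|n]; first by rewrite /= expr0.
exact: intA.
Qed.

Lemma JMG n y : JM n (fun s => (Gf y s)%:E).
Proof.
apply/measurable_EFinP.
exact: (measurable_fun_pair2 (f := fun pt : X * n.-tuple X => Gf pt.1 pt.2) y (mGf n)).
Qed.

Definition gn n (y : X) := iter_int n (fun s => (Gf y s)%:E).

Lemma gn_ge0 n y : 0 <= gn n y.
Proof. by apply: iter_int_ge0 => s _; rewrite lee_fin Gf_ge0. Qed.

Lemma mgn n : measurable_fun setT (gn n).
Proof.
apply: (@iter_int_meas R n _ X (fun y s => (Gf y s)%:E)).
  by move=> p s; rewrite lee_fin Gf_ge0.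
by apply/measurable_EFinP; exact: (mGf n).
Qed.

Lemma gn_S n x0 : gn n.+1 x0 = \int[mu]_y (An n y + (kap x0 y)%:E * gn n y).
Proof.
rewrite /gn /=; apply: eq_integral => y _.
transitivity (iter_int n (fun s => (Qf (y::s))%:E + (kap x0 y)%:E * (Gf y s)%:E)).
  by congr iter_int; apply/funext => s; rewrite /= EFinD EFinM.
rewrite iter_intD.
- by rewrite iter_intZ ?kap_ge0 //; [move=> s; rewrite lee_fin Gf_ge0|exact: JMG].
- by move=> s; rewrite lee_fin Qf_ge0.
- by move=> s; rewrite mule_ge0 // lee_fin ?kap_ge0 ?Gf_ge0.
- exact: (@JM_cons R n _ y (JMQ n.+1)).
- by apply: measurable_funeM; exact: JMG.
Qed.

Lemma intG n x0 : gn n x0 <= (n.+1%:R * K ^+ n)%:E.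
Proof.
elim: n x0 => [|n IH] x0; first by rewrite /gn /= mul1r expr0.
rewrite gn_S ge0_integralD //; first last.
- apply: emeasurable_funM; last exact: mgn.
  by apply/measurable_EFinP; apply: mkap.
- by move=> y _; rewrite mule_ge0 ?lee_fin ?kap_ge0 ?gn_ge0.
- exact: mAn.
- by move=> y _; exact: An_ge0.
have mk : measurable_fun setT (fun y => (kap x0 y)%:E).
  by apply/measurable_EFinP; apply: mkap.
have H2 : \int[mu]_y ((kap x0 y)%:E * gn n y) <= K%:E * (n.+1%:R * K ^+ n)%:E.
  apply: le_trans (_ : \int[mu]_y ((kap x0 y)%:E * (n.+1%:R * K ^+ n)%:E) <= _).
    apply: int_le_nm => y.
      by rewrite mule_ge0 ?lee_fin ?kap_ge0 ?gn_ge0.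
    apply: lee_pmul => //; first by rewrite lee_fin kap_ge0.
    all: try exact: gn_ge0.
  rewrite (ge0_integralZr mu measurableT mk) //.
  all: try by move=> y _; rewrite lee_fin kap_ge0.
  all: try by rewrite lee_fin mulr_ge0 ?exprn_ge0.
  apply: lee_pmul => //.
  all: try by rewrite lee_fin mulr_ge0 ?exprn_ge0.
  all: try by apply: integral_ge0 => y _; rewrite lee_fin kap_ge0.
have H := leeD (intA n) H2.
apply: le_trans H _.
rewrite -EFinM -EFinD lee_fin.
rewrite -[n.+2]addn1 natrD exprS.
by rewrite le_eqVlt; apply/orP; left; apply/eqP; ring.
Qed.

Local Close Scope ereal_scope.

Definition PVf k d (q : seq X) := \prod_(1 <= j < k.+1) `|V (nth d q j)|.
Definition PDf k d (q : seq X) := \prod_(0 <= j < k.+1) dist3 (nth d q j) (nth d q j.+1).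
Definition SDf k d (q : seq X) := \sum_(0 <= j < k.+1) dist3 (nth d q j) (nth d q j.+1).

Lemma ciE k d q : chain_integrand V k d q = PVf k d q / PDf k d q * SDf k d q.
Proof. by []. Qed.

Lemma PVf_cons k d x q : PVf k.+1 d (x :: q) = `|V (nth d q 0)| * PVf k d q.
Proof. by rewrite /PVf big_add1 /= big_ltn. Qed.

Lemma PDf_cons k d x q : PDf k.+1 d (x :: q) = dist3 x (nth d q 0) * PDf k d q.
Proof. by rewrite /PDf big_ltn //= big_add1. Qed.

Lemma SDf_cons k d x q : SDf k.+1 d (x :: q) = dist3 x (nth d q 0) + SDf k d q.
Proof. by rewrite /SDf big_ltn //= big_add1. Qed.

Lemma PVf_def k d d' q : size q = k.+2 -> PVf k d q = PVf k d' q.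
Proof.
move=> hq; apply: eq_big_nat => j /andP[_ hj].
have h1 : (j < size q)%N by rewrite hq ltnS ltnW.
by rewrite (set_nth_default d' d h1).
Qed.

Lemma PDf_def k d d' q : size q = k.+2 -> PDf k d q = PDf k d' q.
Proof.
move=> hq; apply: eq_big_nat => j /andP[_ hj].
have h1 : (j < size q)%N by rewrite hq ltnS ltnW.
have h2 : (j.+1 < size q)%N by rewrite hq ltnS.
by rewrite (set_nth_default d' d h1) (set_nth_default d' d h2).
Qed.

Lemma SDf_def k d d' q : size q = k.+2 -> SDf k d q = SDf k d' q.
Proof.
move=> hq; apply: eq_big_nat => j /andP[_ hj].
have h1 : (j < size q)%N by rewrite hq ltnS ltnW.
have h2 : (j.+1 < size q)%N by rewrite hq ltnS.
by rewrite (set_nth_default d' d h1) (set_nth_default d' d h2).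
Qed.

Lemma PVf_ge0 k d q : 0 <= PVf k d q.
Proof. by apply: prodr_ge0 => j _. Qed.

Lemma PDf_ge0 k d q : 0 <= PDf k d q.
Proof. by apply: prodr_ge0 => j _; exact: dist3_ge0. Qed.

Lemma SDf_ge0 k d q : 0 <= SDf k d q.
Proof. by apply: sumr_ge0 => j _; exact: dist3_ge0. Qed.

Lemma Qf_eq s y :
  `|V y| * PVf (size s) y (y :: s ++ [:: z]) / PDf (size s) y (y :: s ++ [:: z])
  = Qf (y :: s).
Proof.
elim: s y => [|w s IH] y.
  by rewrite /PVf /PDf /= big_geq // big_nat1 /= !mulr1 /kap dist3C.
change (size (w :: s)) with (size s).+1.
rewrite PVf_cons PDf_cons /=.
rewrite (PVf_def _ y w); last by rewrite /= size_cat addn1.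
rewrite (PDf_def _ y w); last by rewrite /= size_cat addn1.
rewrite -[kap (head z s) w * Qf s]/(Qf (w :: s)) -IH /kap dist3C invfM.
ring.
Qed.

Lemma inv_mul_le1 (e : R) : e^-1 * e <= 1.
Proof.
have [->|nz] := eqVneq e 0; first by rewrite invr0 mul0r.
by rewrite mulVf.
Qed.

Lemma pw s x0 : chain_integrand V (size s) x0 (x0 :: s ++ [:: z]) <= Gf x0 s.
Proof.
elim: s x0 => [|y s IH] x0.
  rewrite ciE /PVf /PDf /SDf /= big_geq // !big_nat1 /= div1r.
  exact: inv_mul_le1.
change (size (y :: s)) with (size s).+1.
rewrite ciE PVf_cons PDf_cons SDf_cons /=.
have hq : size (y :: s ++ [:: z]) = (size s).+2 by rewrite /= size_cat addn1.
rewrite (PVf_def _ x0 y _ hq) (PDf_def _ x0 y _ hq) (SDf_def _ x0 y _ hq).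
have := IH y; rewrite ciE => IHy.
set P := PVf _ _ _ in IHy *; set D := PDf _ _ _ in IHy *; set S := SDf _ _ _ in IHy *.
have hQ := Qf_eq s y; rewrite -/P -/D in hQ.
set e := dist3 x0 y; set v := `|V y|.
have -> : v * P / (e * D) * (e + S) = (v * P / D) * (e^-1 * e) + (v / e) * (P / D * S).
  by rewrite invfM; ring.
apply: lerD.
  rewrite hQ -[X in _ <= X]mulr1; apply: ler_wpM2l; first exact: Qf_ge0.
  exact: inv_mul_le1.
apply: ler_pM.
- by apply: divr_ge0; [exact: normr_ge0|exact: dist3_ge0].
- by rewrite mulr_ge0 ?divr_ge0 ?PVf_ge0 ?PDf_ge0 ?SDf_ge0.
- exact: lexx.
- exact: IHy.
Qed.

End chain.

Theorem lemma2p5 (R : realType) (V : R3 R -> R)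
  (mV : measurable_fun [set: R3 R] V)
  (H1 : (\int[(@leb3 R \x @leb3 R)%E]_(z in [set: R3 R * R3 R])
           (`|V z.1| * `|V z.2| / dist3 z.1 z.2 ^+ 2)%:E
         < ((4 * pi) ^+ 2)%:E)%E)
  (H2 : (Knorm V < (4 * pi)%:E)%E) :
  forall k : nat, (0 < k)%N ->
    (chain_sup V k <= (k.+1%:R * fine (Knorm V) ^+ k)%:E)%E.
Proof.
move=> k _.
have mV' : measurable_fun [set: (measurableTypeR R * measurableTypeR R) * measurableTypeR R] V.
  exact: mV.
have hX : forall x : R3 R,
    (\int[@leb3 R]_(y in setT) (`|V y| / dist3 x y)%:E <= Knorm V)%E.
  by move=> x; apply: ereal_sup_ubound; exists x.
have KK0 : (0 <= Knorm V)%E.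
  apply: le_trans (hX ((0, 0), 0)).
  by apply: integral_ge0 => y _; rewrite lee_fin divr_ge0 ?dist3_ge0.
have KKfin : Knorm V \is a fin_num.
  by rewrite ge0_fin_numE // (lt_trans H2) ?ltey.
have K0 : 0 <= fine (Knorm V) by apply: fine_ge0.
have hK : forall x, (\int[@leb3 R]_y (kap R V x y)%:E <= (fine (Knorm V))%:E)%E.
  by move=> x; rewrite fineK //; exact: hX.
apply: ge_ereal_sup => _ [x0 _ [z _ <-]].
apply: le_trans (_ : iter_int k (fun s => (Gf R V z x0 s)%:E) <= _)%E.
  apply: iter_int_le => s hs.
    rewrite lee_fin (ciE R V) mulr_ge0 ?divr_ge0 ?(PVf_ge0 R V) ?(PDf_ge0 R) ?(SDf_ge0 R) //.
  by rewrite lee_fin -hs; exact: (pw R V z).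
exact: (intG R V mV' z _ K0 hK).
Qed.
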